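(* Consider the setting and algorithm described in the context and assume (A1), (A2), (A3). Given a time horizon $K>0$, a node $i_0\in\{1,\dots,N\}$ and a privacy level $\epsilon_{i_0}>0$, the algorithm run for $K$ iterations preserves $\epsilon_{i_0}$-differential privacy for node $i_0$'s objective function if $$\sum_{k=1}^K\sqrt d\Big(\frac1{\alpha u_{e,i_0}}+\frac1{u_{w,i_0}}\Big)\frac{\alpha\delta}{r_{i_0}^k(1-\alpha\bar M)}\le\epsilon_{i_0}.$$
   Context: Problem. Let $\mathcal G=(\mathcal V,\mathcal E)$ be a connected undirected graph with $\mathcal V=\{1,\dots,N\}$. Each node $i$ holds a differentiable $f_i:\mathbb R^d\to\mathbb R$. (A1) Each $\nabla f_i$ is $M_i$-Lipschitz; $\bar M=\max_iM_i$. (A2) $f=\sum_if_i$ satisfies $\inf f>-\infty$. $\tilde f(\mathbf x)=\sum_if_i(x_i)$ for $\mathbf x=(x_1^{\mathsf T},\dots,x_N^{\mathsf T})^{\mathsf T}$. $\mathbf P\in\mathbb R^{N\times N}$ symmetric positive semidefinite with $p_{ij}=0$ if $i\ne j$, $\{i,j\}\notin\mathcal E$; $\mathbf L=\mathbf P\otimes\mathbf I_d$. (A3) $\mathrm{Null}(\mathbf L)=\{\mathbf x:x_1=\dots=x_N\}$. Algorithm. Parameters $\rho,\alpha,\beta>0$, a predetermined sequence $\eta^k\in(0,1)$, decay rates $r_i\in(0,1)$, scales $u_{e,i},u_{w,i}>0$. $\mathbf x^0$ arbitrary, $\mathbf d^0=\mathbf q^0=\mathbf 0$. At each $k$, independent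 noises $w_i^k,e_i^k\in\mathbb R^d$ with independent Laplace coordinates (density $\frac1{2\theta}e^{-|x|/\theta}$) of scales $r_i^ku_{w,i}$ and $r_i^ku_{e,i}$, stacked into $\mathbf w^k,\mathbf e^k$. Updates: $\mathbf y^k=\mathbf x^k+(1-\eta^k)\mathbf d^k+\mathbf w^k$, $\mathbf z^k=\nabla\tilde f(\mathbf x^k)+\eta^k\mathbf q^k+\rho\mathbf L\mathbf y^k+\mathbf e^k$, $\mathbf x^{k+1}=\mathbf x^k+\mathbf w^k-\alpha(\mathbf z^k-\mathbf e^k)+\beta\mathbf L\mathbf z^k$, $\mathbf d^{k+1}=\eta^k\mathbf d^k+\mathbf y^k$, $\mathbf q^{k+1}=\eta^k\mathbf q^k+\rho\mathbf L\mathbf y^k$. The observation available to an eavesdropper is $\mathcal O=\{\mathbf y^k,\mathbf z^k\}_{k}$ (the transmitted quantities). $\delta$-adjacency: for $\delta>0$, two function sets $F^{(1)}=\{f_i^{(1)}\}_{i=1}^N$, $F^{(2)}=\{f_i^{(2)}\}_{i=1}^N$ (each satisfying the assumptions above) are $\delta$-adjacent if there is $i_0$ with $f_i^{(1)}=f_i^{(2)}$ for $i\ne i_0$ and $\sup_{x\in\mathbb R^d}\|\nabla f_{i_0}^{(1)}(x)-\nabla f_{i_0}^{(2)}(x)\|\le\delta$. $\epsilon$-differential privacy (for node $i_0$'s objective): for any $\delta$-adjacent $F^{(1)},F^{(2)}$ (differing at $i_0$) and any observation $\mathcal O$, $\mathbb P(F^{(1)}|\mathcal O)\le e^{\epsilon}\mathbb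 P(F^{(2)}|\mathcal O)$, where $\mathbb P(F^{(h)}|\mathcal O)$ is the probability of inferring $F^{(h)}$ from $\mathcal O$; concretely, with initialization, network and $\{\eta^k\}$ fixed, the observation is determined by the noise sequences, and $\mathbb P(F^{(h)}|\mathcal O)$ is the probability (density) of the noise sequences that produce $\mathcal O$ when the algorithm runs on $F^{(h)}$. *)

(* Defs.v *)
From HB Require Import structures.
From mathcomp Require Import all_boot all_order all_algebra.
From mathcomp Require Import all_classical all_reals all_analysis.
Set Implicit Arguments. Unset Strict Implicit. Unset Printing Implicit Defensive.
Import Order.TTheory GRing.Theory Num.Theory.
Local Open Scope ring_scope.

Section Defs.
Variable R : realType.

Definition dotv (d : nat) (u v : 'rV[R]_d) : R := \sum_(c < d) u 0 c * v 0 c.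
Definition enorm (d : nat) (u : 'rV[R]_d) : R := Num.sqrt (dotv u u).

Definition is_gradient (d : nat) (f : 'rV[R]_d -> R) (g : 'rV[R]_d -> 'rV[R]_d) :=
  forall x : 'rV[R]_d, forall eps : R, 0 < eps -> exists2 eta : R, 0 < eta &
    forall h : 'rV[R]_d, enorm h < eta ->
      `| f (x + h) - f x - dotv (g x) h | <= eps * enorm h.

Definition lipschitz (d : nat) (g : 'rV[R]_d -> 'rV[R]_d) (M : R) :=
  forall x y : 'rV[R]_d, enorm (g x - g y) <= M * enorm (x - y).

Definition valid_funset (N d : nat) (M : 'I_N -> R)
    (f : 'I_N -> 'rV[R]_d -> R) (g : 'I_N -> 'rV[R]_d -> 'rV[R]_d) :=
  [/\ (forall i, is_gradient (f i) (g i)),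
      (forall i, lipschitz (g i) (M i)) &
      (exists m : R, forall x : 'rV[R]_d, m <= \sum_(i < N) f i x)].

Definition adjacent (N d : nat) (delta : R) (i0 : 'I_N)
    (f1 f2 : 'I_N -> 'rV[R]_d -> R) (g1 g2 : 'I_N -> 'rV[R]_d -> 'rV[R]_d) :=
  (forall i, i != i0 -> f1 i = f2 i /\ g1 i = g2 i) /\
  (forall x : 'rV[R]_d, enorm (g1 i0 x - g2 i0 x) <= delta).

(* Stacked states: an N x d matrix whose i-th row is x_i.
   With this layout, L x = (P (x) I_d) x is the matrix product P *m X. *)
Definition stack_grad (N d : nat) (g : 'I_N -> 'rV[R]_d -> 'rV[R]_d)
    (X : 'M[R]_(N, d)) : 'M[R]_(N, d) :=
  \matrix_(i < N, c < d) g i (row i X) 0 c.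

Fixpoint alg_state (N d : nat) (P : 'M[R]_N) (rho alpha beta : R) (eta : nat -> R)
    (g : 'I_N -> 'rV[R]_d -> 'rV[R]_d) (x0 : 'M[R]_(N, d))
    (w e : nat -> 'M[R]_(N, d)) (k : nat)
    : 'M[R]_(N, d) * 'M[R]_(N, d) * 'M[R]_(N, d) :=
  match k with
  | 0 => (x0, 0, 0)
  | k'.+1 =>
      let: (x, dd, q) := alg_state P rho alpha beta eta g x0 w e k' in
      let y := x + (1 - eta k') *: dd + w k' in
      let z := stack_grad g x + eta k' *: q + rho *: (P *m y) + e k' in
      (x + w k' - alpha *: (z - e k') + beta *: (P *m z),
       eta k' *: dd + y,
       eta k' *: q + rho *: (P *m y))
  end.

Definition alg_y (N d : nat) (P : 'M[R]_N) (rho alpha beta : R) (eta : nat -> R)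
    (g : 'I_N -> 'rV[R]_d -> 'rV[R]_d) (x0 : 'M[R]_(N, d))
    (w e : nat -> 'M[R]_(N, d)) (k : nat) : 'M[R]_(N, d) :=
  let: (x, dd, q) := alg_state P rho alpha beta eta g x0 w e k in
  x + (1 - eta k) *: dd + w k.

Definition alg_z (N d : nat) (P : 'M[R]_N) (rho alpha beta : R) (eta : nat -> R)
    (g : 'I_N -> 'rV[R]_d -> 'rV[R]_d) (x0 : 'M[R]_(N, d))
    (w e : nat -> 'M[R]_(N, d)) (k : nat) : 'M[R]_(N, d) :=
  let: (x, dd, q) := alg_state P rho alpha beta eta g x0 w e k in
  let y := x + (1 - eta k) *: dd + w k in
  stack_grad g x + eta k *: q + rho *: (P *m y) + e k.

Definition produces (N d : nat) (P : 'M[R]_N) (rho alpha beta : R) (eta : nat -> R)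
    (g : 'I_N -> 'rV[R]_d -> 'rV[R]_d) (x0 : 'M[R]_(N, d)) (K : nat)
    (w e : nat -> 'M[R]_(N, d)) (Y Z : nat -> 'M[R]_(N, d)) :=
  forall k, (k < K)%N ->
    alg_y P rho alpha beta eta g x0 w e k = Y k /\
    alg_z P rho alpha beta eta g x0 w e k = Z k.

Definition laplace (theta v : R) : R := expR (- `|v| / theta) / (2 * theta).

Definition noise_density (N d : nat) (r uw ue : 'I_N -> R) (K : nat)
    (w e : nat -> 'M[R]_(N, d)) : R :=
  \prod_(k < K) \prod_(i < N) \prod_(c < d)
    (laplace (r i ^+ k * uw i) (w k i c) * laplace (r i ^+ k * ue i) (e k i c)).

(* epsilon-differential privacy of node i0's objective, for the algorithm run
   K iterations: for every delta-adjacent pair of function sets differing at i0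
   and every observation O, P(F1 | O) <= e^eps P(F2 | O), where P(F | O) is the
   density of the noise sequences producing O on F. *)
Definition diff_private (N d : nat) (M : 'I_N -> R) (P : 'M[R]_N)
    (rho alpha beta : R) (eta : nat -> R) (r uw ue : 'I_N -> R)
    (x0 : 'M[R]_(N, d)) (K : nat) (delta : R) (i0 : 'I_N) (eps : R) :=
  forall (f1 f2 : 'I_N -> 'rV[R]_d -> R) (g1 g2 : 'I_N -> 'rV[R]_d -> 'rV[R]_d),
    valid_funset M f1 g1 -> valid_funset M f2 g2 ->
    adjacent delta i0 f1 f2 g1 g2 ->
    forall (Y Z : nat -> 'M[R]_(N, d)) (w1 e1 : nat -> 'M[R]_(N, d)),
      produces P rho alpha beta eta g1 x0 K w1 e1 Y Z ->
      (exists w2 e2, produces P rho alpha beta eta g2 x0 K w2 e2 Y Z) /\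
      (forall w2 e2, produces P rho alpha beta eta g2 x0 K w2 e2 Y Z ->
         noise_density r uw ue K w1 e1
           <= expR eps * noise_density r uw ue K w2 e2).

End Defs.

(* Main.v *)
Require Import Defs.
From HB Require Import structures.
From mathcomp Require Import all_boot all_order all_algebra.
From mathcomp Require Import all_classical all_reals all_analysis.
From mathcomp Require Import ring lra.
Import Order.TTheory GRing.Theory Num.Theory.
Set Implicit Arguments. Unset Strict Implicit. Unset Printing Implicit Defensive.
Local Open Scope ring_scope.

Section Aux.
Variable R : realType.

Lemma cs_sum (n : nat) (a b : 'I_n -> R) :
  (\sum_i a i * b i) ^+ 2 <= (\sum_i a i ^+ 2) * (\sum_i b i ^+ 2).
Proof.
set A := \sum_i a i ^+ 2; set B := \sum_i b i ^+ 2; set C := \sum_i a i * b i.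
have H : 0 <= \sum_i (A * b i - C * a i) ^+ 2.
  by apply: sumr_ge0 => i _; exact: sqr_ge0.
have E : \sum_i (A * b i - C * a i) ^+ 2 = A * (A * B - C ^+ 2).
  have E1 : forall i, (A * b i - C * a i) ^+ 2 =
     (A ^+ 2 * b i ^+ 2 - (2 * A * C) * (a i * b i)) + C ^+ 2 * a i ^+ 2.
    by move=> i; ring.
  under eq_bigr do rewrite E1.
  rewrite big_split sumrB /= -!mulr_sumr -/A -/B -/C; ring.
have A0 : 0 <= A by apply: sumr_ge0 => i _; exact: sqr_ge0.
case: (ltrP 0 A) => hA.
  by rewrite -subr_ge0; rewrite E in H; rewrite -(pmulr_rge0 _ hA).
have A00 : A = 0 by apply/eqP; rewrite eq_le hA A0.
have ha : forall i, a i = 0.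
  move=> i; apply/eqP; rewrite -sqrf_eq0; apply/eqP.
  move/eqP: A00; rewrite psumr_eq0; last by move=> j _; exact: sqr_ge0.
  by move/allP => /(_ i (mem_index_enum _)) /eqP.
have -> : C = 0 by rewrite /C big1 // => i _; rewrite ha mul0r.
by rewrite expr0n /= mulr_ge0 // sumr_ge0 // => i _; exact: sqr_ge0.
Qed.


Lemma dotv_ge0 d (u : 'rV[R]_d) : 0 <= dotv u u.
Proof. by apply: sumr_ge0 => c _; rewrite -expr2; exact: sqr_ge0. Qed.

Lemma enorm_ge0 d (u : 'rV[R]_d) : 0 <= enorm u.
Proof. exact: sqrtr_ge0. Qed.

Lemma dot_le d (u v : 'rV[R]_d) : dotv u v <= enorm u * enorm v.
Proof.
rewrite /enorm -sqrtrM ?dotv_ge0 //.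
apply: (le_trans (ler_norm _)).
rewrite -sqrtr_sqr ler_sqrt; last by rewrite mulr_ge0 ?dotv_ge0.
rewrite /dotv (_ : \sum_c u 0 c * u 0 c = \sum_c u 0 c ^+ 2); last first.
  by apply: eq_bigr => c _; rewrite expr2.
rewrite (_ : \sum_c v 0 c * v 0 c = \sum_c v 0 c ^+ 2); last first.
  by apply: eq_bigr => c _; rewrite expr2.
have := @cs_sum _ (fun c => u 0 c) (fun c => v 0 c); rewrite /=.
move=> H; exact: H.
Qed.

Lemma enorm_triangle d (u v : 'rV[R]_d) : enorm (u + v) <= enorm u + enorm v.
Proof.
rewrite {1}/enorm -(ger0_norm (addr_ge0 (enorm_ge0 u) (enorm_ge0 v))).
rewrite -sqrtr_sqr ler_sqrt; last exact: sqr_ge0.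
have -> : dotv (u + v) (u + v) = dotv u u + 2 * dotv u v + dotv v v.
  rewrite /dotv mulr_sumr -!big_split /=; apply: eq_bigr => c _.
  by rewrite !mxE; ring.
have hu := sqr_sqrtr (dotv_ge0 u); have hv := sqr_sqrtr (dotv_ge0 v).
rewrite -/(enorm u) in hu; rewrite -/(enorm v) in hv.
have := dot_le u v; rewrite -hu -hv; nra.
Qed.

Lemma enormZ d a (u : 'rV[R]_d) : enorm (a *: u) = `|a| * enorm u.
Proof.
rewrite /enorm -sqrtr_sqr -sqrtrM ?sqr_ge0 //; congr Num.sqrt.
rewrite /dotv mulr_sumr; apply: eq_bigr => c _; rewrite !mxE; ring.
Qed.

Lemma enormN d (u : 'rV[R]_d) : enorm (- u) = enorm u.
Proof. by rewrite -scaleN1r enormZ normrN normr1 mul1r. Qed.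

Lemma enormB d (u v : 'rV[R]_d) : enorm (u - v) = enorm (v - u).
Proof. by rewrite -enormN opprB. Qed.

Lemma sum_abs_le d (u : 'rV[R]_d) :
  \sum_(c < d) `|u 0 c| <= Num.sqrt (d%:R) * enorm u.
Proof.
rewrite /enorm -sqrtrM ?ler0n //.
rewrite -(ger0_norm (sumr_ge0 _ (fun c _ => normr_ge0 (u 0 c)))).
rewrite -sqrtr_sqr ler_sqrt; last by rewrite mulr_ge0 ?ler0n ?dotv_ge0.
have := @cs_sum _ (fun c => `|u 0 c|) (fun c => 1).
rewrite /= (eq_bigr _ (fun c _ => mulr1 _)).
rewrite (eq_bigr (fun c => 1) (fun c _ => expr1n _ _)) sumr_const card_ord.
rewrite mulrC (_ : \sum_i `|u 0 i| ^+ 2 = dotv u u) //.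
rewrite /dotv; apply: eq_bigr => c _; by rewrite real_normK ?num_real // expr2.
Qed.

Lemma lap_le (th a b : R) : 0 < th ->
  laplace th a <= expR (`|a - b| / th) * laplace th b.
Proof.
move=> hth; rewrite /laplace mulrA -expRD ler_pM2r; last first.
  by rewrite invr_gt0 mulr_gt0.
rewrite ler_expR.
have k : - `|a| <= `|a - b| - `|b| by have := lerB_dist b a; rewrite distrC; lra.
rewrite -mulrDl ler_pM2r ?invr_gt0 //; lra.
Qed.

Lemma lap_ge0 (th a : R) : 0 < th -> 0 <= laplace th a.
Proof. by move=> h; rewrite /laplace divr_ge0 ?expR_ge0 // mulr_ge0 // ltW. Qed.


Lemma row_sg N d (g : 'I_N -> 'rV[R]_d -> 'rV[R]_d) X i :
  row i (stack_grad g X) = g i (row i X).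
Proof. by apply/rowP => c; rewrite !mxE. Qed.

Fixpoint x2seq N d (P : 'M[R]_N) rho alpha beta eta g1 g2 (x0 : 'M[R]_(N,d)) w1 e1 k :=
  match k with
  | 0 => x0
  | k'.+1 => (alg_state P rho alpha beta eta g1 x0 w1 e1 k'.+1).1.1 +
      alpha *: (stack_grad g1 (alg_state P rho alpha beta eta g1 x0 w1 e1 k').1.1
                - stack_grad g2 (x2seq P rho alpha beta eta g1 g2 x0 w1 e1 k'))
  end.

Definition w2seq N d (P : 'M[R]_N) rho alpha beta eta g1 g2 (x0 : 'M[R]_(N,d)) w1 e1 k :=
  w1 k + (alg_state P rho alpha beta eta g1 x0 w1 e1 k).1.1
       - x2seq P rho alpha beta eta g1 g2 x0 w1 e1 k.
Definition e2seq N d (P : 'M[R]_N) rho alpha beta eta g1 g2 (x0 : 'M[R]_(N,d)) w1 e1 k :=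
  e1 k + stack_grad g1 (alg_state P rho alpha beta eta g1 x0 w1 e1 k).1.1
       - stack_grad g2 (x2seq P rho alpha beta eta g1 g2 x0 w1 e1 k).

Lemma exist_run N d (P : 'M[R]_N) rho alpha beta eta g1 g2 (x0 : 'M[R]_(N,d)) w1 e1 k :
  alg_state P rho alpha beta eta g2 x0
     (w2seq P rho alpha beta eta g1 g2 x0 w1 e1)
     (e2seq P rho alpha beta eta g1 g2 x0 w1 e1) k =
  (x2seq P rho alpha beta eta g1 g2 x0 w1 e1 k,
   (alg_state P rho alpha beta eta g1 x0 w1 e1 k).1.2,
   (alg_state P rho alpha beta eta g1 x0 w1 e1 k).2).
Proof.
elim: k => [//|k IH].
rewrite [LHS]/= IH /w2seq /e2seq /=.
case: (alg_state P rho alpha beta eta g1 x0 w1 e1 k) => [[x dd] q] /=.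
set X2 := x2seq P rho alpha beta eta g1 g2 x0 w1 e1 k.
have Ey : X2 + (1 - eta k) *: dd + (w1 k + x - X2) = x + (1 - eta k) *: dd + w1 k.
  by apply/matrixP => i j; rewrite !mxE; ring.
rewrite Ey.
set PY := P *m (x + (1 - eta k) *: dd + w1 k).
set A := stack_grad g2 X2; set B := stack_grad g1 x.
have Ez : A + eta k *: q + rho *: PY + (e1 k + B - A) = B + eta k *: q + rho *: PY + e1 k.
  by apply/matrixP => i j; rewrite !mxE; ring.
rewrite Ez.
set PZ := P *m (B + eta k *: q + rho *: PY + e1 k).
clearbody PZ PY A B X2.
congr (_, _, _); apply/matrixP => i j; rewrite !mxE; ring.
Qed.

Lemma exist_yz N d (P : 'M[R]_N) rho alpha beta eta g1 g2 (x0 : 'M[R]_(N,d)) w1 e1 k :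
  alg_y P rho alpha beta eta g2 x0
     (w2seq P rho alpha beta eta g1 g2 x0 w1 e1)
     (e2seq P rho alpha beta eta g1 g2 x0 w1 e1) k =
  alg_y P rho alpha beta eta g1 x0 w1 e1 k /\
  alg_z P rho alpha beta eta g2 x0
     (w2seq P rho alpha beta eta g1 g2 x0 w1 e1)
     (e2seq P rho alpha beta eta g1 g2 x0 w1 e1) k =
  alg_z P rho alpha beta eta g1 x0 w1 e1 k.
Proof.
rewrite /alg_y /alg_z exist_run /w2seq /e2seq.
case: (alg_state P rho alpha beta eta g1 x0 w1 e1 k) => [[x dd] q] /=.
set X2 := x2seq P rho alpha beta eta g1 g2 x0 w1 e1 k.
have Ey : X2 + (1 - eta k) *: dd + (w1 k + x - X2) = x + (1 - eta k) *: dd + w1 k.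
  by apply/matrixP => i j; rewrite !mxE; ring.
rewrite Ey; split => //.
set PY := P *m (x + (1 - eta k) *: dd + w1 k).
set A := stack_grad g2 X2; set B := stack_grad g1 x.
clearbody PY A B X2.
by apply/matrixP => i j; rewrite !mxE; ring.
Qed.

Lemma step_rel N d (P : 'M[R]_N) rho alpha beta eta g1 g2 (x0 : 'M[R]_(N,d))
    w1 e1 w2 e2 k xa xb dd q :
  alg_state P rho alpha beta eta g1 x0 w1 e1 k = (xa, dd, q) ->
  alg_state P rho alpha beta eta g2 x0 w2 e2 k = (xb, dd, q) ->
  alg_y P rho alpha beta eta g1 x0 w1 e1 k = alg_y P rho alpha beta eta g2 x0 w2 e2 k ->
  alg_z P rho alpha beta eta g1 x0 w1 e1 k = alg_z P rho alpha beta eta g2 x0 w2 e2 k ->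
  [/\ w2 k = w1 k + xa - xb,
      e2 k = e1 k + stack_grad g1 xa - stack_grad g2 xb &
      alg_state P rho alpha beta eta g2 x0 w2 e2 k.+1 =
      ((alg_state P rho alpha beta eta g1 x0 w1 e1 k.+1).1.1
         + alpha *: (stack_grad g1 xa - stack_grad g2 xb),
       (alg_state P rho alpha beta eta g1 x0 w1 e1 k.+1).1.2,
       (alg_state P rho alpha beta eta g1 x0 w1 e1 k.+1).2)].
Proof.
move=> SA SB; rewrite /alg_y /alg_z /= SA SB => Hy; rewrite Hy => Hz.
have Ew : w2 k = w1 k + xa - xb.
  apply/matrixP => i j; move/matrixP: Hy => /(_ i j); rewrite !mxE => h; lra.
set PY := P *m (xb + (1 - eta k) *: dd + w2 k).
have Ee : e2 k = e1 k + stack_grad g1 xa - stack_grad g2 xb.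
  move: Hz; rewrite -/PY; set A := stack_grad g1 xa; set B := stack_grad g2 xb.
  clearbody PY A B => Hz.
  apply/matrixP => i j; move/matrixP: Hz => /(_ i j); rewrite !mxE => h; lra.
split => //.
rewrite /=; move: Hz; rewrite -/PY => Hz; rewrite Hz /=.
set Z := stack_grad g2 xb + eta k *: q + rho *: PY + e2 k.
rewrite Ee Ew.
set A := stack_grad g1 xa; set B := stack_grad g2 xb.
set PZ := P *m Z.
clearbody PZ Z PY A B.
congr (_, _, _).
apply/matrixP => i j; rewrite !mxE; ring.
Qed.

Lemma rel_all N d (P : 'M[R]_N) rho alpha beta eta g1 g2 (x0 : 'M[R]_(N,d))
    K w1 e1 w2 e2 Y Z :
  produces P rho alpha beta eta g1 x0 K w1 e1 Y Z ->
  produces P rho alpha beta eta g2 x0 K w2 e2 Y Z ->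
  forall k, (k <= K)%N ->
  (alg_state P rho alpha beta eta g2 x0 w2 e2 k).1.2 =
     (alg_state P rho alpha beta eta g1 x0 w1 e1 k).1.2 /\
  (alg_state P rho alpha beta eta g2 x0 w2 e2 k).2 =
     (alg_state P rho alpha beta eta g1 x0 w1 e1 k).2.
Proof.
move=> H1 H2; elim=> [//|k IH] hk.
have hk' : (k < K)%N by [].
have [E1 E2] := IH (ltnW hk').
have [Y1 Z1] := H1 k hk'; have [Y2 Z2] := H2 k hk'.
case SA: (alg_state P rho alpha beta eta g1 x0 w1 e1 k) E1 E2 => [[xa dd] q].
case SB: (alg_state P rho alpha beta eta g2 x0 w2 e2 k) => [[xb dd'] q'] E1 E2.
move: E1 E2 => /= E1 E2; subst dd' q'.
have [_ _ E] := step_rel SA SB (etrans Y1 (esym Y2)) (etrans Z1 (esym Z2)).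
rewrite SA SB /=; move: E; rewrite /= SA SB /=; by case=> _ -> ->.
Qed.

Lemma rowDZ N d (A B C : 'M[R]_(N,d)) a i :
  row i (A + a *: (B - C)) = row i A + a *: (row i B - row i C).
Proof. by apply/rowP => c; rewrite !mxE. Qed.

Lemma rowB' N d (A B : 'M[R]_(N,d)) i : row i (A - B) = row i A - row i B.
Proof. by apply/rowP => c; rewrite !mxE. Qed.

Lemma enorm0 d : enorm (0 : 'rV[R]_d) = 0.
Proof. by rewrite /enorm /dotv big1 ?sqrtr0 // => c _; rewrite mxE mul0r. Qed.

Lemma Bfix (alpha Mb delta : R) : alpha * Mb < 1 ->
  alpha * (Mb * (alpha * delta / (1 - alpha * Mb)) + delta) = alpha * delta / (1 - alpha * Mb).
Proof. move=> h; have h' : 1 - alpha * Mb != 0 by rewrite subr_eq0 eq_sym lt_eqF. by field. Qed.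

Lemma grad_diff d (g1 g2 : 'rV[R]_d -> 'rV[R]_d) Mb delta ra rb :
  Defs.lipschitz g1 Mb -> (forall x, enorm (g1 x - g2 x) <= delta) ->
  enorm (g1 ra - g2 rb) <= Mb * enorm (rb - ra) + delta.
Proof.
move=> hL hd.
have -> : g1 ra - g2 rb = (g1 ra - g1 rb) + (g1 rb - g2 rb) by rewrite addrA subrK.
apply: (le_trans (enorm_triangle _ _)); apply: lerD => //.
by rewrite (enormB rb); apply: hL.
Qed.

Lemma bound_all N d (P : 'M[R]_N) rho alpha beta eta g1 g2 (x0 : 'M[R]_(N,d))
    K w1 e1 w2 e2 Y Z Mb delta i0 :
  0 < alpha -> 0 <= Mb -> alpha * Mb < 1 -> Defs.lipschitz (g1 i0) Mb ->
  (forall i, i != i0 -> g1 i = g2 i) ->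
  (forall x, enorm (g1 i0 x - g2 i0 x) <= delta) ->
  produces P rho alpha beta eta g1 x0 K w1 e1 Y Z ->
  produces P rho alpha beta eta g2 x0 K w2 e2 Y Z ->
  forall k, (k <= K)%N ->
  (forall i, i != i0 -> row i (alg_state P rho alpha beta eta g2 x0 w2 e2 k).1.1
                      = row i (alg_state P rho alpha beta eta g1 x0 w1 e1 k).1.1) /\
  enorm (row i0 ((alg_state P rho alpha beta eta g2 x0 w2 e2 k).1.1
                 - (alg_state P rho alpha beta eta g1 x0 w1 e1 k).1.1))
     <= alpha * delta / (1 - alpha * Mb).
Proof.
move=> ha hM haM hL hg hd H1 H2.
have hB : 0 <= alpha * delta / (1 - alpha * Mb).
  have hd0 : 0 <= delta := le_trans (enorm_ge0 _) (hd 0).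
  apply: divr_ge0; [by rewrite mulr_ge0 // ltW | by rewrite subr_ge0 ltW].
elim=> [_|k IH hk].
  split => //=; rewrite subrr (_ : row i0 0 = 0 :> 'rV[R]_d) ?enorm0 //.
  by apply/rowP => c; rewrite !mxE.
have hk' : (k < K)%N by [].
have [IH1 IH2] := IH (ltnW hk').
have [E1 E2] := rel_all H1 H2 (ltnW hk').
have [Y1 Z1] := H1 k hk'; have [Y2 Z2] := H2 k hk'.
set SAk := alg_state P rho alpha beta eta g1 x0 w1 e1 k in IH1 IH2 E1 E2 Y1 Z1.
set SBk := alg_state P rho alpha beta eta g2 x0 w2 e2 k in IH1 IH2 E1 E2 Y2 Z2.
have tup3 : forall p : 'M[R]_(N,d) * 'M[R]_(N,d) * 'M[R]_(N,d), p = (p.1.1, p.1.2, p.2).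
  by case=> [[]].
have SA : SAk = (SAk.1.1, SAk.1.2, SAk.2) by exact: tup3.
have SB : SBk = (SBk.1.1, SAk.1.2, SAk.2) by rewrite -E1 -E2; exact: tup3.
have [_ _ E] := step_rel SA SB (etrans Y1 (esym Y2)) (etrans Z1 (esym Z2)).
rewrite E /=.
set xa' := (alg_state P rho alpha beta eta g1 x0 w1 e1 k.+1).1.1.
split.
  move=> i hi; rewrite rowDZ !row_sg (hg i hi) IH1 // subrr scaler0 addr0 //.
rewrite rowB' rowDZ (addrC (row i0 xa')) addrK !row_sg enormZ (ger0_norm (ltW ha)).
rewrite -(Bfix delta haM) ler_pM2l //.
apply: (le_trans (grad_diff _ _ hL (hd))); rewrite lerD2r ler_wpM2l //.
by rewrite -rowB'.
Qed.

Lemma noise_rel N d (P : 'M[R]_N) rho alpha beta eta g1 g2 (x0 : 'M[R]_(N,d))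
    K w1 e1 w2 e2 Y Z Mb delta i0 :
  0 < alpha -> 0 <= Mb -> alpha * Mb < 1 -> Defs.lipschitz (g1 i0) Mb ->
  (forall i, i != i0 -> g1 i = g2 i) ->
  (forall x, enorm (g1 i0 x - g2 i0 x) <= delta) ->
  produces P rho alpha beta eta g1 x0 K w1 e1 Y Z ->
  produces P rho alpha beta eta g2 x0 K w2 e2 Y Z ->
  forall k, (k < K)%N ->
  [/\ (forall i, i != i0 -> forall c, w2 k i c = w1 k i c /\ e2 k i c = e1 k i c),
      \sum_c `|w1 k i0 c - w2 k i0 c| <= Num.sqrt d%:R * (alpha * delta / (1 - alpha * Mb)) &
      \sum_c `|e1 k i0 c - e2 k i0 c| <=
         Num.sqrt d%:R * (Mb * (alpha * delta / (1 - alpha * Mb)) + delta)].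
Proof.
move=> ha hM haM hL hg hd H1 H2 k hk'.
have [IH1 IH2] := bound_all ha hM haM hL hg hd H1 H2 (ltnW hk').
have [E1 E2] := rel_all H1 H2 (ltnW hk').
have [Y1 Z1] := H1 k hk'; have [Y2 Z2] := H2 k hk'.
set SAk := alg_state P rho alpha beta eta g1 x0 w1 e1 k in IH1 IH2 E1 E2 Y1 Z1.
set SBk := alg_state P rho alpha beta eta g2 x0 w2 e2 k in IH1 IH2 E1 E2 Y2 Z2.
have tup3 : forall p : 'M[R]_(N,d) * 'M[R]_(N,d) * 'M[R]_(N,d), p = (p.1.1, p.1.2, p.2).
  by case=> [[]].
have SA : SAk = (SAk.1.1, SAk.1.2, SAk.2) by exact: tup3.
have SB : SBk = (SBk.1.1, SAk.1.2, SAk.2) by rewrite -E1 -E2; exact: tup3.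
have [Ew Ee _] := step_rel SA SB (etrans Y1 (esym Y2)) (etrans Z1 (esym Z2)).
set xa := SAk.1.1 in Ew Ee IH1 IH2; set xb := SBk.1.1 in Ew Ee IH1 IH2.
split.
- move=> i hi c.
  have hx : xb i c = xa i c.
    by have := congr1 (fun m : 'rV[R]_d => m 0 c) (IH1 i hi); rewrite /= !mxE.
  by rewrite Ew Ee !mxE hx (hg i hi) (IH1 i hi) !addrK.
- have -> : \sum_c `|w1 k i0 c - w2 k i0 c| = \sum_c `|row i0 (xb - xa) 0 c|.
    by apply: eq_bigr => c _; rewrite Ew !mxE; congr `|_|; ring.
  apply: le_trans (sum_abs_le _) _.
  by rewrite ler_wpM2l ?sqrtr_ge0.
- have -> : \sum_c `|e1 k i0 c - e2 k i0 c| =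
      \sum_c `|(g1 i0 (row i0 xa) - g2 i0 (row i0 xb)) 0 c|.
    by apply: eq_bigr => c _; rewrite Ee !mxE -normrN; congr `|_|; ring.
  apply: le_trans (sum_abs_le _) _.
  rewrite ler_wpM2l ?sqrtr_ge0 //.
  apply: le_trans (grad_diff _ _ hL hd) _.
  by rewrite lerD2r ler_wpM2l // -rowB'.
Qed.

Lemma prod_bound n (F G c : 'I_n -> R) :
  (forall j, 0 <= F j) -> (forall j, F j <= expR (c j) * G j) ->
  \prod_j F j <= expR (\sum_j c j) * \prod_j G j.
Proof.
move=> h0 h; rewrite expR_sum -big_split /=; apply: ler_prod => j _.
by rewrite h0 h.
Qed.

Lemma density_bound N d (r uw ue : 'I_N -> R) K (w1 e1 w2 e2 : nat -> 'M[R]_(N,d)) i0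
    (T : nat -> R) :
  (forall i, 0 < r i) -> (forall i, 0 < uw i) -> (forall i, 0 < ue i) ->
  (forall k, (k < K)%N -> forall i, i != i0 -> forall c,
      w2 k i c = w1 k i c /\ e2 k i c = e1 k i c) ->
  (forall k, (k < K)%N ->
     (\sum_c `|w1 k i0 c - w2 k i0 c|) / (r i0 ^+ k * uw i0)
     + (\sum_c `|e1 k i0 c - e2 k i0 c|) / (r i0 ^+ k * ue i0) <= T k) ->
  noise_density r uw ue K w1 e1 <= expR (\sum_(k < K) T k) * noise_density r uw ue K w2 e2.
Proof.
move=> hr hw he Heq HT.
have thw : forall i k, 0 < r i ^+ k * uw i by move=> i k; rewrite mulr_gt0 ?exprn_gt0.
have the : forall i k, 0 < r i ^+ k * ue i by move=> i k; rewrite mulr_gt0 ?exprn_gt0.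
rewrite /noise_density; apply: prod_bound => [k|k].
  apply: prodr_ge0 => i _; apply: prodr_ge0 => c _.
  by rewrite mulr_ge0 ?lap_ge0.
pose t := fun i : 'I_N => if i == i0 then T k else 0.
have -> : T k = \sum_i t i.
  by rewrite /t -big_mkcond big_pred1_eq.
apply: prod_bound => [i|i].
  by apply: prodr_ge0 => c _; rewrite mulr_ge0 ?lap_ge0.
rewrite /t; case: eqP => [->|/eqP hi]; last first.
  rewrite expR0 mul1r le_eqVlt; apply/orP; left; apply/eqP; apply: eq_bigr => c _.
  by have [-> ->] := Heq k (ltn_ord k) i hi c.
apply: le_trans (_ : _ <= expR (\sum_c (`|w1 k i0 c - w2 k i0 c| / (r i0 ^+ k * uw i0)
    + `|e1 k i0 c - e2 k i0 c| / (r i0 ^+ k * ue i0))) *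
    \prod_c (laplace (r i0 ^+ k * uw i0) (w2 k i0 c) * laplace (r i0 ^+ k * ue i0) (e2 k i0 c))) _.
  apply: prod_bound => [c|c].
    by rewrite mulr_ge0 ?lap_ge0.
  have h1 := lap_le (w1 k i0 c) (w2 k i0 c) (thw i0 k).
  have h2 := lap_le (e1 k i0 c) (e2 k i0 c) (the i0 k).
  apply: le_trans (ler_pM (lap_ge0 _ (thw i0 k)) (lap_ge0 _ (the i0 k)) h1 h2) _.
  rewrite expRD le_eqVlt; apply/orP; left; apply/eqP.
  set A := expR _; set B := expR _; set X := laplace _ (w2 k i0 c); set Y := laplace _ (e2 k i0 c).
  by rewrite mulrACA.
apply: ler_wpM2r.
  by apply: prodr_ge0 => c _; rewrite mulr_ge0 ?lap_ge0.
rewrite ler_expR; apply: le_trans (HT k (ltn_ord k)).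
by rewrite big_split /= -!mulr_suml.
Qed.

End Aux.

Theorem theorem3 (R : realType) (N d : nat)
    (edge : rel 'I_N) (P : 'M[R]_N) (M : 'I_N -> R)
    (rho alpha beta : R) (eta : nat -> R) (r uw ue : 'I_N -> R)
    (x0 : 'M[R]_(N, d)) (K : nat) (delta : R) (i0 : 'I_N) (eps : R) :
  (* connected undirected graph *)
  (forall i j, edge i j = edge j i) -> (forall i, ~~ edge i i) ->
  (forall i j, connect edge i j) ->
  (* P symmetric PSD, supported on the graph *)
  P^T = P -> (forall v : 'cV[R]_N, 0 <= (v^T *m P *m v) 0 0) ->
  (forall i j, i != j -> ~~ edge i j -> P i j = 0) ->
  (* (A3): Null(L) is the consensus subspace *)
  (forall X : 'M[R]_(N, d), P *m X = 0 <-> (forall i j, row i X = row j X)) ->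
  (* parameters *)
  0 < rho -> 0 < alpha -> 0 < beta ->
  (forall k, 0 < eta k < 1) ->
  (forall i, 0 < r i < 1) -> (forall i, 0 < uw i) -> (forall i, 0 < ue i) ->
  alpha * \big[Num.max/M i0]_(i < N) M i < 1 ->
  (0 < K)%N -> 0 < delta -> 0 < eps ->
  \sum_(1 <= k < K.+1)
     Num.sqrt (d%:R) * (1 / (alpha * ue i0) + 1 / uw i0)
       * (alpha * delta / (r i0 ^+ k * (1 - alpha * \big[Num.max/M i0]_(i < N) M i)))
    <= eps ->
  diff_private M P rho alpha beta eta r uw ue x0 K delta i0 eps.
Proof.
move=> _ _ _ _ _ _ _ hrho ha hb heta hr huw hue haM hK hdelta heps hsum.
move=> f1 f2 g1 g2 V1 V2 [Adj1 Adj2] Y Z w1 e1 H1.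
split.
  exists (w2seq P rho alpha beta eta g1 g2 x0 w1 e1), (e2seq P rho alpha beta eta g1 g2 x0 w1 e1).
  move=> k hk; have [-> ->] := exist_yz P rho alpha beta eta g1 g2 x0 w1 e1 k; exact: H1.
move=> w2 e2 H2.
have hg : forall i, i != i0 -> g1 i = g2 i by move=> i hi; case: (Adj1 i hi).
case: (posnP d) => [d0|dpos].
  have E : forall w e : nat -> 'M[R]_(N,d), noise_density r uw ue K w e = 1.
    move=> w e; rewrite /noise_density big1 // => k _; rewrite big1 // => i _.
    by subst d; rewrite big_ord0.
  rewrite !E mulr1; apply: le_trans (expR_ge1Dx eps); lra.
set Mb := \big[Num.max/M i0]_(i < N) M i in haM hsum *.
case: V1 => _ L1 _.
have hM0 : 0 <= M i0.
  have := L1 i0 (const_mx 1) 0; rewrite subr0.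
  have hs : 0 < enorm (const_mx 1 : 'rV[R]_d).
    rewrite /enorm sqrtr_gt0 /dotv (eq_bigr (fun _ => 1)); last by move=> c _; rewrite !mxE mulr1.
    by rewrite sumr_const card_ord ltr0n.
  move=> h; rewrite -(pmulr_lge0 _ hs); exact: le_trans (enorm_ge0 _) h.
have hMb : M i0 <= Mb by exact: le_bigmax.
have hLb : Defs.lipschitz (g1 i0) Mb.
  move=> x y; apply: le_trans (L1 i0 x y) _; by rewrite ler_wpM2r ?enorm_ge0.
have hMb0 : 0 <= Mb by exact: le_trans hM0 hMb.
have hr' : forall i, 0 < r i by move=> i; case/andP: (hr i).
set B := alpha * delta / (1 - alpha * Mb).
apply: le_trans (density_bound (w1 := w1) (e1 := e1) (w2 := w2) (e2 := e2) (i0 := i0) (T := fun k => Num.sqrt d%:R * B / (r i0 ^+ k * uw i0)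
   + Num.sqrt d%:R * (Mb * B + delta) / (r i0 ^+ k * ue i0)) hr' huw hue _ _) _.
- move=> k hk i hi c.
  by have [Hq _ _] := noise_rel ha hMb0 haM hLb hg Adj2 H1 H2 hk; apply: Hq.
- move=> k hk.
  have [_ Hw He] := noise_rel ha hMb0 haM hLb hg Adj2 H1 H2 hk.
  apply: lerD; rewrite ler_pM2r // invr_gt0 mulr_gt0 ?exprn_gt0 //.
apply: ler_wpM2r.
  rewrite /noise_density; apply: prodr_ge0 => k _; apply: prodr_ge0 => i _.
  apply: prodr_ge0 => c _.
  by rewrite mulr_ge0 // lap_ge0 // mulr_gt0 ?exprn_gt0 //; case/andP: (hr i).
rewrite ler_expR; apply: le_trans hsum.
rewrite big_add1 /= big_mkord; apply: ler_sum => k _.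
have hB : alpha * (Mb * B + delta) = B by exact: Bfix.
have hBa : Mb * B + delta = B / alpha.
  rewrite -[X in X / alpha]hB; field; by rewrite gt_eqF.
have hB0 : 0 <= B.
  apply: divr_ge0; [by rewrite mulr_ge0 // ltW | by rewrite subr_ge0 ltW].
have [r0 r1] := andP (hr i0).
have hrk : 0 < r i0 ^+ k by rewrite exprn_gt0.
have hrk1 : 0 < r i0 ^+ k.+1 by rewrite exprn_gt0.
have hle : r i0 ^+ k.+1 <= r i0 ^+ k.
  rewrite exprS; have hh : 0 <= (1 - r i0) * r i0 ^+ k by rewrite mulr_ge0 // ?subr_ge0 ltW. nra.
have step : forall X u, 0 <= X -> 0 < u -> X / (r i0 ^+ k * u) <= X / (r i0 ^+ k.+1 * u).
  move=> X u hX hu; rewrite ler_wpM2l // lef_pV2 ?posrE ?mulr_gt0 //.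
  by rewrite ler_wpM2r // ltW.
apply: le_trans (_ : _ <= Num.sqrt d%:R * B / (r i0 ^+ k.+1 * uw i0)
   + Num.sqrt d%:R * (Mb * B + delta) / (r i0 ^+ k.+1 * ue i0)) _.
  apply: lerD; apply: step => //; rewrite mulr_ge0 ?sqrtr_ge0 //.
  by rewrite hBa divr_ge0 // ltW.
rewrite le_eqVlt; apply/orP; left; apply/eqP.
rewrite hBa /B.
have h1 : 1 - alpha * Mb != 0 by rewrite subr_eq0 eq_sym lt_eqF.
have h2 : alpha != 0 by rewrite gt_eqF.
have h3 : uw i0 != 0 by rewrite gt_eqF.
have h4 : ue i0 != 0 by rewrite gt_eqF.
have h5 : r i0 ^+ k.+1 != 0 by rewrite gt_eqF.
field; by rewrite h1 h2 h3 h4 h5.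
Qed.
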